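(* Let $n\ge1$ and let $F$ be an o-polynomial over $\mathbb{F}_{2^n}$. Then for every $b\in\mathbb{F}_{2^n}^*$, $$\sum_{v\in\mathbb{F}_{2^n}} W_F^2(bv,v)=2^{2n+1}.$$
   Context: $tr_n$ denotes the absolute trace from $\mathbb{F}_{2^n}$ to $\mathbb{F}_2$, $\mathbb{F}_{2^n}^*=\mathbb{F}_{2^n}\setminus\{0\}$, and $W_F(u,v)=\sum_{x\in\mathbb{F}_{2^n}}(-1)^{tr_n(vF(x))+tr_n(ux)}$. In $PG(2,2^n)$, a hyperoval is a set of $2^n+2$ points no three of which lie on a common line. A function (polynomial) $F$ over $\mathbb{F}_{2^n}$ is an o-polynomial if $\{(1,t,F(t)) : t\in\mathbb{F}_{2^n}\}\cup\{(0,1,0),(0,0,1)\}$ is a hyperoval of $PG(2,2^n)$. Equivalently (known fact), $F$ is an o-polynomial iff $F$ is a permutation and, for each $s\in\mathbb{F}_{2^n}$, the map $F_s$ defined by $F_s(t)=(F(t+s)+F(s))/t$ for $t\ne0$ and $F_s(0)=0$ is a permutation of $\mathbb{F}_{2^n}$. *)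

(* Defs.v *)
From HB Require Import structures.
From mathcomp Require Import all_boot all_order all_algebra all_field.
Set Implicit Arguments. Unset Strict Implicit. Unset Printing Implicit Defensive.
Import Order.TTheory GRing.Theory Num.Theory.
Local Open Scope ring_scope.

(* Absolute trace tr_n : F_{2^n} -> F_2, with F_2 viewed inside K as {0,1}. *)
Definition trn (K : finFieldType) (n : nat) (x : K) : K :=
  \sum_(i < n) x ^+ (2 ^ i).

(* (-1)^a for a in F_2 (represented as 0 or 1 in K), valued in int. *)
Definition sgn (K : finFieldType) (a : K) : int := if a == 0 then 1 else -1.

Definition walsh (K : finFieldType) (n : nat) (F : K -> K) (u v : K) : int :=
  \sum_(x : K) sgn (trn n (v * F x) + trn n (u * x)).

(* Homogeneous coordinates of the points of
   {(1,t,F t) : t in K} ∪ {(0,1,0),(0,0,1)}, indexed by option (option K). *)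
Definition opt_point (K : finFieldType) (F : K -> K) (i : option (option K))
  : K * K * K :=
  match i with
  | None => (0, 1, 0)
  | Some None => (0, 0, 1)
  | Some (Some t) => (1, t, F t)
  end.

Definition on_line (K : finFieldType) (l p : K * K * K) : Prop :=
  l.1.1 * p.1.1 + l.1.2 * p.1.2 + l.2 * p.2 = 0.

Definition collinear (K : finFieldType) (p q r : K * K * K) : Prop :=
  exists l : K * K * K, l <> (0, 0, 0) /\ on_line l p /\ on_line l q /\ on_line l r.

(* F is an o-polynomial: the 2^n+2 (pairwise distinct) points above form a
   hyperoval, i.e. no three of them lie on a common line. *)
Definition o_polynomial (K : finFieldType) (F : K -> K) : Prop :=
  forall i j k : option (option K), i <> j -> j <> k -> i <> k ->
    ~ collinear (opt_point F i) (opt_point F j) (opt_point F k).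

(* Main.v *)
Require Import Defs.
From HB Require Import structures.
From mathcomp Require Import all_boot all_order all_algebra all_field.
From mathcomp Require Import ring zify.
Import Order.TTheory GRing.Theory Num.Theory.
Local Open Scope ring_scope.
Set Implicit Arguments. Unset Strict Implicit.

Section Tr.
Variables (K : finFieldType) (n : nat).
Hypothesis hn : (1 <= n)%N.
Hypothesis hK : #|K| = (2 ^ n)%N.

Lemma ch2 : 2 \in [pchar K].
Proof. exact: (card_finPcharP hK). Qed.

Lemma sqrD (x y : K) : (x + y) ^+ 2 = x ^+ 2 + y ^+ 2.
Proof. by rewrite sqrrD mulr2n (addrr_pchar2 ch2) addr0. Qed.

Lemma powD (x y : K) i : (x + y) ^+ (2 ^ i) = x ^+ (2 ^ i) + y ^+ (2 ^ i).
Proof.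
elim: i => [|i IH]; first by rewrite !expr1.
by rewrite expnSr !exprM IH sqrD.
Qed.

Lemma trnD (x y : K) : trn n (x + y) = trn n x + trn n y.
Proof. by rewrite /trn -big_split /=; apply: eq_bigr => i _; rewrite powD. Qed.

Lemma trn0 : trn n (0 : K) = 0.
Proof. by rewrite /trn big1 // => i _; rewrite expr0n expn_eq0. Qed.

Lemma sum_sq (m : nat) (f : 'I_m -> K) : (\sum_i f i) ^+ 2 = \sum_i (f i) ^+ 2.
Proof.
elim: m f => [|m IH] f; first by rewrite !big_ord0 expr0n.
by rewrite !big_ord_recr /= sqrD IH.
Qed.

Lemma trn_sq (x : K) : (trn n x) ^+ 2 = trn n x.
Proof.
rewrite /trn sum_sq.
have E : forall i, x ^+ (2 ^ i) ^+ 2 = x ^+ (2 ^ i.+1) by move=> i; rewrite -exprM expnSr.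
under eq_bigr do rewrite E.
have Xn : x ^+ (2 ^ n) = x by rewrite -hK expf_card.
case: n hn Xn => // m _ Xn.
rewrite big_ord_recr big_ord_recl /= Xn.
by rewrite addrC.
Qed.

Lemma trn01 (x : K) : (trn n x == 0) || (trn n x == 1).
Proof.
have h : trn n x * (trn n x - 1) = 0 by rewrite mulrBr mulr1 -expr2 trn_sq subrr.
move/eqP: h; rewrite mulf_eq0 subr_eq0 => /orP[->|/eqP ->]//.
by rewrite eqxx orbT.
Qed.

Definition trP : {poly K} := \sum_(i < n) 'X^(2 ^ i).

Lemma trP_ex : exists w : K, trn n w != 0.
Proof.
apply/existsP; rewrite -negb_forall; apply/negP => /forallP H.
have nz : trP != 0.
  apply/eqP => /(congr1 (fun p : {poly K} => p`_1)).
  rewrite coef0 /trP coef_sum (bigD1 (Ordinal hn)) //= coefXn expn0 eqxx big1 ?addr0.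
    by move/eqP; rewrite oner_eq0.
  move=> i hi; rewrite coefXn; case: eqP => // /esym h.
  have : (2 ^ i == 1)%N by rewrite h.
  rewrite -(expn0 2) eqn_exp2l // => /eqP h0; move: hi; apply: contraNeq => _; apply/eqP/val_inj; rewrite /= h0. by [].
have := max_poly_roots nz _ (enum_uniq K).
rewrite -cardE hK.
have -> : all (root trP) (enum K).
  apply/allP => w _; rewrite /root /trP horner_sum.
  under eq_bigr do rewrite hornerXn. exact: H.
move=> /(_ isT).
have : (size trP <= (2 ^ n.-1).+1)%N.
  apply: leq_trans (size_sum _ _ _) _.
  apply/bigmax_leqP => i _; rewrite size_polyXn ltnS leq_exp2l //.
  by rewrite -ltnS prednK.
case: (n) hn => // m _ /=; rewrite expnS => h1 h2.
have := leq_trans h2 h1. rewrite ltnS. have := expn_gt0 2 m. lia.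
Qed.

Lemma sgn_add (a c : K) : (a == 0) || (a == 1) -> (c == 0) || (c == 1) ->
  sgn (a + c) = sgn a * sgn c.
Proof.
have h11 : (1 : K) + 1 = 0 by rewrite (addrr_pchar2 ch2).
move=> /orP[] /eqP -> /orP[] /eqP ->; rewrite /sgn ?addr0 ?add0r ?h11 ?eqxx ?oner_eq0 //=.
Qed.

Lemma sgn_tr_add (x y : K) : sgn (trn n x + trn n y) = sgn (trn n x) * sgn (trn n y).
Proof. by apply: sgn_add; apply: trn01. Qed.

Lemma char_sum (a : K) :
  \sum_(v : K) sgn (trn n (v * a)) = if a == 0 then (2 ^ n)%:Z else 0.
Proof.
case: eqP => [->|/eqP ha].
  under eq_bigr do rewrite mulr0 trn0 /sgn eqxx.
  rewrite sumr_const (@eq_card _ _ K) // hK. exact: natz.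
have [w hw] := trP_ex.
have hw1 : trn n w = 1 by move: (trn01 w); rewrite (negPf hw) => /eqP.
set S := \sum__ _.
have : S = - S.
  rewrite {1}/S (reindex_inj (addrI (w / a))) /=.
  rewrite /S -sumrN; apply: eq_bigr => v _.
  rewrite mulrDl divfK // trnD hw1 sgn_add ?trn01 ?eqxx ?orbT //.
  by rewrite {1}/sgn oner_eq0 mulN1r.
clearbody S; lia.
Qed.
End Tr.
Section Geo.
Variables (K : finFieldType) (F : K -> K).
Hypothesis hF : o_polynomial F.

Definition slope (x y : K) := (F y - F x) / (y - x).
Definition lineL (x s : K) : K * K * K := (s * x - F x, - s, 1).

Lemma lineL_nz x s : lineL x s <> (0, 0, 0).
Proof. by case=> _ _ /eqP; rewrite oner_eq0. Qed.

Lemma lineL_on x s t : F t - F x = s * (t - x) ->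
  on_line (lineL x s) (opt_point F (Some (Some t))).
Proof.
move=> h; rewrite /on_line /=.
have -> : (s * x - F x) * 1 + - s * t + 1 * F t = (F t - F x) - s * (t - x) by ring.
by rewrite h subrr.
Qed.

Lemma slopeE x y c : y != x -> (slope x y == c) = (F y - F x == c * (y - x)).
Proof.
move=> hyx; have hd : y - x != 0 by rewrite subr_eq0.
apply/eqP/eqP => [h|h].
  by rewrite -h /slope divfK.
by rewrite /slope h mulfK.
Qed.

Lemma slope_on x y : y != x -> F y - F x = slope x y * (y - x).
Proof. by move=> h; apply/eqP; rewrite -slopeE. Qed.

Lemma slope_neq0 x y : y != x -> slope x y != 0.
Proof.
move=> hyx; apply/eqP => h0.
apply: (hF (i := Some (Some x)) (j := Some (Some y)) (k := None)) => //.
- by case=> /eqP; rewrite eq_sym (negPf hyx).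
exists (lineL x 0); split; first exact: lineL_nz.
split; first by apply: lineL_on; rewrite !subrr mulr0.
split; first by apply: lineL_on; rewrite slope_on // h0.
by rewrite /on_line /= oppr0 mulr0 mul0r mulr0 !addr0.
Qed.

Lemma slope_inj x y z : y != x -> z != x -> slope x y = slope x z -> y = z.
Proof.
move=> hyx hzx hs; apply/eqP/negPn/negP => hyz.
apply: (hF (i := Some (Some x)) (j := Some (Some y)) (k := Some (Some z))).
- by case=> /eqP; rewrite eq_sym (negPf hyx).
- by case=> /eqP; rewrite (negPf hyz).
- by case=> /eqP; rewrite eq_sym (negPf hzx).
exists (lineL x (slope x y)); split; first exact: lineL_nz.
split; first by apply: lineL_on; rewrite !subrr mulr0.
split; first by apply: lineL_on; rewrite slope_on.
by apply: lineL_on; rewrite hs slope_on.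
Qed.

Lemma slope_uniq x c : c != 0 ->
  exists y0, y0 != x /\ forall y, y != x -> (slope x y == c) = (y == y0).
Proof.
move=> hc.
set D := [set~ x].
have inj : {in D &, injective (slope x)}.
  by move=> y z; rewrite !in_setC1 => hy hz; apply: slope_inj.
have sub : slope x @: D \subset [set~ 0].
  by apply/subsetP => s /imsetP[y]; rewrite in_setC1 => hy ->; rewrite in_setC1 slope_neq0.
have ceq : #|slope x @: D| = #|[set~ (0 : K)]| by rewrite card_in_imset // !cardsC1.
have : c \in slope x @: D by rewrite ((subset_cardP ceq) sub) in_setC1.
case/imsetP=> y0; rewrite in_setC1 => hy0 hcy0.
exists y0; split => // y hy.
apply/eqP/eqP => [hs|->]; last by rewrite hcy0.
by apply: (@slope_inj x) => //; rewrite hs.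
Qed.
End Geo.

Theorem mainTheorem6 (K : finFieldType) (n : nat) (hn : (1 <= n)%N)
  (hK : #|K| = (2 ^ n)%N) (F : K -> K) (hF : o_polynomial F)
  (b : K) (hb : b != 0) :
  \sum_(v : K) (walsh n F (b * v) v) ^+ 2 = (2 ^ (2 * n + 1))%:Z.
Proof.
set G := fun t => F t + b * t.
have E1 : forall v, walsh n F (b * v) v = \sum_(x : K) sgn (trn n (v * G x)).
  move=> v; apply: eq_bigr => x _; rewrite -trnD //; congr (sgn (trn n _)).
  rewrite /G; ring.
under eq_bigr do rewrite E1 expr2 mulr_suml.
have E2 : forall v x, sgn (trn n (v * G x)) * \sum_(y : K) sgn (trn n (v * G y))
   = \sum_(y : K) sgn (trn n (v * (G x + G y))).
  move=> v x; rewrite mulr_sumr; apply: eq_bigr => y _.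
  by rewrite -(sgn_tr_add hn hK) -(trnD hK) -mulrDr.
under eq_bigr do under eq_bigr do rewrite E2.
rewrite exchange_big /=.
under eq_bigr do rewrite exchange_big /=.
under eq_bigr do under eq_bigr do rewrite (char_sum hn hK).
have card2 : forall x, #|[pred y | G x + G y == 0]| = 2%N.
  move=> x.
  have mb : - b != 0 by rewrite oppr_eq0.
  have [y0 [hy0 Hy0]] := slope_uniq hF x mb.
  rewrite -[RHS](_ : #|[set x; y0]| = 2%N); last by rewrite cards2 eq_sym hy0.
  apply: eq_card => y; rewrite !inE.
  rewrite addr_eq0 (oppr_pchar2 (ch2 hK)) eq_sym.
  have [->|hyx] := eqVneq y x; first by rewrite eqxx.
  rewrite /= -Hy0 // slopeE //.
  rewrite -subr_eq0 -[X in _ = X]subr_eq0.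
  have -> : G y - G x = (F y - F x) - (- b * (y - x)) by rewrite /G; ring.
  by [].
under eq_bigr do rewrite -big_mkcond /= sumr_const card2.
rewrite sumr_const (@eq_card _ _ K) // hK -mulrnA.
rewrite -mulr_natr natz -PoszM; congr Posz.
by rewrite mul2n -addnn addn1 expnS !expnD; lia.
Qed.
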